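(* Let $(K,w_K)$ be an $(n+1)$-dimensional simplicial complex with $w_K\equiv 1$ on a vertex set $V$, and let $(H,w_H)$ be an $(n+1)$-dimensional subcomplex with $w_H\equiv 1$ on the faces of $H$, such that their proper difference $(L,w_L)$ exists, i.e. $L=K$ as simplicial complexes, $w_L=w_K-w_H$ (so $w_L=0$ on faces of $H$ and $w_L=1$ on the other faces of $K$), and $\{F\in K: w_L(F)>0\}$ is a simplicial complex. Let $N=|S_n(K)|$ and let $\lambda_1\le\dots\le\lambda_N$ and $\theta_1\le\dots\le\theta_N$ be the eigenvalues of $\mathcal{L}^{up}_n(K,w_K)$ (the combinatorial up-Laplacian of $K$) and $\mathcal{L}^{up}_n(L,w_L)$, respectively. Put $D_{\mathcal{W}}=\dim C^{n+1}(H,\mathbb{R})-\dim H^{n+1}(H,\mathbb{R})$ and $D_H=\dim C^n(H,\mathbb{R})$, and use the conventions $\lambda_j=0$ for $1-D_{\mathcal{W}}\le j\le 0$ and $\lambda_j=|V|$ for $N+1\le j\le N+D_H$. Then for all $k=1,\dots,N$, $$\lambda_{k-D_{\mathcal{W}}}\le\theta_k\le\lambda_{k+D_H}.$$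
   Context: $S_j(K)$ is the set of $j$-faces of $K$; $C^j(K,\mathbb{R})$ is the space of real cochains on oriented $j$-faces (antisymmetric under orientation reversal), with coboundary $(\delta_j f)([v_0,\dots,v_{j+1}])=\sum_i(-1)^i f([v_0,\dots,\hat v_i,\dots,v_{j+1}])$. For a weight function $w\ge 0$ on faces, $C^j$ carries $(f,g)=\sum_{F\in S_j}w(F)f([F])g([F])$, and the formal adjoint is $(\delta_j^*\bar f)([F])=\sum_{\bar F\supset F,\ \bar F\in S_{j+1}}\frac{w(\bar F)}{w(F)}\mathrm{sgn}([F],\partial[\bar F])\bar f([\bar F])$ if $w(F)\neq0$ and $0$ otherwise, where $\mathrm{sgn}([v_0,\dots,\hat v_i,\dots,v_{j+1}],\partial[v_0,\dots,v_{j+1}])=(-1)^i$. The up-Laplacian is $\mathcal{L}^{up}_n(K,w)=\delta_n^*\delta_n$ on $C^n(K,\mathbb{R})$; a weight function with zeros gives a degenerate weighted complex. $H^{n+1}(H,\mathbb{R})$ is simplicial cohomology with real coefficients. *)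

(* Defs.v *)
From mathcomp Require Import all_boot all_order all_algebra.
Set Implicit Arguments. Unset Strict Implicit. Unset Printing Implicit Defensive.
Import Order.TTheory GRing.Theory Num.Theory.
Local Open Scope ring_scope.

Section SimplicialDefs.
Variable T : finType.

Definition is_complex (K : {set {set T}}) : Prop :=
  set0 \notin K /\
  forall F G : {set T}, F \in K -> G \subset F -> G != set0 -> G \in K.

Definition has_dim (K : {set {set T}}) (d : nat) : Prop :=
  (forall F, F \in K -> (#|F| <= d.+1)%N) /\ exists2 F, F \in K & #|F| = d.+1.

Definition faces (K : {set {set T}}) (j : nat) : {set {set T}} :=
  [set F in K | #|F| == j.+1].

(* Orientation: every face is oriented by the fixed total order enum_rank on T.
   pos v Fb = index of v in the increasing enumeration of Fb. *)
Definition pos (v : T) (Fb : {set T}) : nat :=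
  #|[set u in Fb | (enum_rank u < enum_rank v)%N]|.

(* sgn([F], d[Fb]) if F is a facet of Fb, and 0 otherwise. *)
Definition inc (R : nzRingType) (Fb F : {set T}) : R :=
  if (F \subset Fb) && (#|Fb| == #|F|.+1)
  then \sum_(v in Fb :\: F) (-1) ^+ pos v Fb
  else 0.

Definition cobound_mx (R : nzRingType) (K : {set {set T}}) (j : nat)
  : 'M[R]_(#|faces K j.+1|, #|faces K j|) :=
  \matrix_(a, b) inc R (enum_val a) (enum_val b).

(* dim H^{j+1}(K,R) = dim ker delta_{j+1} - dim im delta_j. *)
Definition dim_cohom (R : fieldType) (K : {set {set T}}) (j : nat) : nat :=
  (#|faces K j.+1| - \rank (cobound_mx R K j.+1) - \rank (cobound_mx R K j))%N.

Definition up_laplacian (R : fieldType) (K : {set {set T}}) (w : {set T} -> R)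
  (n : nat) : 'M[R]_(#|faces K n|) :=
  \matrix_(a, b)
    let F := enum_val a in let G := enum_val b in
    if w F != 0 then
      \sum_(Fb in faces K n.+1) w Fb / w F * inc R Fb F * inc R Fb G
    else 0.

(* lam : 'I_N -> R seen as lam_1 <= ... <= lam_N (1-based), extended by
   lam_j = 0 for j <= 0 and lam_j = top for j > N. *)
Definition ext_eig (R : nzRingType) (N : nat) (lam : 'I_N -> R) (top : R)
  (j : int) : R :=
  match j with
  | Posz m => if m is m'.+1 then
                (if insub m' is Some i then lam i else top)
              else 0
  | Negz _ => 0
  end.

Definition sorted_eigs (R : realFieldType) (N : nat) (A : 'M[R]_N)
  (lam : 'I_N -> R) : Prop :=
  char_poly A = \prod_(i < N) ('X - (lam i)%:P) /\
  (forall i j : 'I_N, (i <= j)%N -> lam i <= lam j).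

End SimplicialDefs.

(* Main.v *)
Require Import Defs.
From mathcomp Require Import all_boot all_order all_algebra fingroup perm.
From mathcomp Require Import zify ring.
Set Implicit Arguments. Unset Strict Implicit. Unset Printing Implicit Defensive.
Import Order.TTheory GRing.Theory Num.Theory.
Local Open Scope ring_scope.

Lemma card_ordP N (P : pred nat) : #|[pred i : 'I_N | P i]| = count P (iota 0 N).
Proof.
rewrite cardE /enum_mem size_filter -enumT -val_enum_ord count_map.
by apply: eq_count.
Qed.

Lemma card_ord_ge N r : (r <= N)%N -> #|[pred i : 'I_N | (r <= i)%N]| = (N - r)%N.
Proof.
move=> rN; rewrite card_ordP.
have := count_predC (fun i => (i < 0 + r)%N) (iota 0 N).
rewrite -size_filter filter_iota_ltn // !size_iota => h.
rewrite -{2}h addKn; apply: eq_count => i /=; by rewrite -leqNgt.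
Qed.

Lemma char_poly_conjQ (F : fieldType) n (A P Q : 'M[F]_n) :
  P *m Q = 1%:M -> Q *m P = 1%:M -> char_poly (P *m A *m Q) = char_poly A.
Proof.
move=> PQ QP; rewrite /char_poly /char_poly_mx.
have -> : 'X%:M - map_mx polyC (P *m A *m Q) =
  map_mx polyC P *m ('X%:M - map_mx polyC A) *m map_mx polyC Q.
  rewrite mulmxBr mulmxBl !map_mxM; congr (_ - _).
  by rewrite mul_mx_scalar -scalemxAl -map_mxM PQ map_mx1 scalemx1.
rewrite !det_mulmx !det_map_mx mulrC mulrA -rmorphM -det_mulmx QP.
by rewrite det1 rmorph1 mul1r.
Qed.

Lemma char_poly_conj (F : fieldType) n (A P : 'M[F]_n) :
  P \in unitmx -> char_poly (P *m A *m invmx P) = char_poly A.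
Proof. by move=> uP; apply: char_poly_conjQ; rewrite ?mulmxV ?mulVmx. Qed.

Lemma char_poly_reindex (F : fieldType) n m (A : 'M[F]_n) (B : 'M[F]_m)
  (f : 'I_m -> 'I_n) : injective f -> m = n ->
  (forall i j, B i j = A (f i) (f j)) -> char_poly B = char_poly A.
Proof.
move=> finj emn; subst m => hB.
pose s := perm finj.
have -> : B = perm_mx s *m A *m perm_mx s^-1.
  by rewrite -col_permE -row_permE; apply/matrixP => i j; rewrite !mxE !permE hB.
by apply: char_poly_conjQ; rewrite -perm_mxM ?mulgV ?mulVg perm_mx1.
Qed.

Lemma char_poly_zero_cols (F : fieldType) p (B : 'M[F]_p) (S : {set 'I_p}) :
  (forall i j, j \in S -> B i j = 0) -> 'X ^+ #|S| %| char_poly B.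
Proof.
elim: p B S => [|p IH] B S hB.
  by rewrite (_ : S = set0) ?cards0 ?expr0 ?dvd1p //; apply/setP => -[].
have [S0|[j jS]] := set_0Vmem S; first by rewrite S0 cards0 expr0 dvd1p.
have hc : char_poly B = 'X * char_poly (row' j (col' j B)).
  rewrite /char_poly (expand_det_col _ j) (bigD1 j) //= big1 ?addr0.
    rewrite /cofactor row'_col'_char_poly_mx !mxE eqxx hB // subr0 mulr1n.
    by rewrite -signr_odd oddD addbb mul1r.
  by move=> i /negPf ij; rewrite !mxE ij hB // subr0 mulr0n mul0r.
pose S' := [set k | lift j k \in S].
have cS : #|S| = #|S'|.+1.
  rewrite (cardsD1 j S) jS add1n; congr _.+1.
  rewrite -(card_imset _ (@lift_inj _ j)); apply: eq_card => x.
  rewrite !inE; apply/andP/imsetP => [[xj xS]|[k]].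
    case: (unliftP j x) xj xS => [k ->|->]; last by rewrite eqxx.
    by move=> _ kS; exists k; rewrite ?inE.
  by rewrite inE => kS ->; rewrite eq_sym neq_lift.
rewrite hc cS exprS dvdp_mul2l ?polyX_eq0 //; apply: IH => i k.
by rewrite inE !mxE => /hB ->.
Qed.

Lemma char_poly_rank (F : fieldType) p (A : 'M[F]_p) :
  'X ^+ (p - \rank A) %| char_poly A.
Proof.
set r := \rank A; set L := col_ebase A; set U := row_ebase A.
have uU : U \in unitmx by apply: row_ebase_unit.
rewrite -(char_poly_conj A uU).
have -> : U *m A *m invmx U = (U *m L) *m pid_mx r.
  by rewrite -{1}(mulmx_ebase A) !mulmxA mulmxK.
have -> : (p - r)%N = #|[set j : 'I_p | (r <= j)%N]|.
  by rewrite -card_ord_ge ?rank_leq_col //; apply: eq_card => j; rewrite inE.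
apply: char_poly_zero_cols => i j; rewrite inE => rj.
rewrite mxE big1 // => k _; rewrite [pid_mx _ _ _]mxE.
have [->|ne] := eqVneq (val k) (val j); first by rewrite ltnNge rj andbF mulr0.
by rewrite mulr0.
Qed.

Definition kmx (F : nzRingType) (T : finType) (Phi : T -> T -> F) (S : {set T}) : 'M[F]_#|S| :=
  \matrix_(a, b) Phi (enum_val a) (enum_val b).

Lemma char_kmx_split (F : fieldType) (T : finType) (Phi : T -> T -> F) (S S1 : {set T}) :
  S1 \subset S ->
  (forall x y, x \in S1 -> y \in S :\: S1 -> Phi x y = 0 /\ Phi y x = 0) ->
  char_poly (kmx Phi S) = char_poly (kmx Phi S1) * char_poly (kmx Phi (S :\: S1)).
Proof.
move=> sub hPhi; set S2 := S :\: S1.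
pose g (i : 'I_(#|S1| + #|S2|)) : T :=
  match split i with inl a => enum_val a | inr b => enum_val b end.
have gS i : g i \in S.
  rewrite /g; case: (split i) => a; first exact: (subsetP sub _ (enum_valP a)).
  by have := enum_valP a; rewrite inE => /andP[].
have ginj : injective g.
  move=> i j; rewrite -[i]splitK -[j]splitK /g !unsplitK.
  case: (split i) => a; case: (split j) => b /=.
  - by move=> /enum_val_inj ->.
  - by move=> e; have := enum_valP b; rewrite -e inE (enum_valP a).
  - by move=> e; have := enum_valP a; rewrite e inE (enum_valP b).
  - by move=> /enum_val_inj ->.
pose f i := enum_rank_in (gS i) (g i).
have fE i : enum_val (f i) = g i by rewrite enum_rankK_in.
have finj : injective f.
  by move=> i j /(congr1 enum_val); rewrite !fE => /ginj.
have card : (#|S1| + #|S2| = #|S|)%N.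
  by rewrite -(cardsID S1 S) (setIidPr sub).
rewrite -(@char_poly_reindex _ _ _ (kmx Phi S) (block_mx (kmx Phi S1) 0 0 (kmx Phi S2)) f finj card).
  by rewrite /char_poly char_block_diag_mx det_ublock.
move=> i j; rewrite {3}/kmx [in RHS]mxE !fE -[i]splitK -[j]splitK /g !unsplitK.
case: (split i) => a; case: (split j) => b /=.
- by rewrite block_mxEul mxE.
- by rewrite block_mxEur mxE; case: (hPhi _ _ (enum_valP a) (enum_valP b)).
- by rewrite block_mxEdl mxE; case: (hPhi _ _ (enum_valP b) (enum_valP a)).
- by rewrite block_mxEdr mxE.
Qed.

Section Mono.
Variables (R : realFieldType) (N : nat) (f : 'I_N -> R).
Hypothesis fmono : forall i j : 'I_N, (i <= j)%N -> f i <= f j.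

Lemma count_mapf (P : pred R) : count P (map f (enum 'I_N)) = #|[pred i | P (f i)]|.
Proof. by rewrite enumT count_map cardE /enum_mem size_filter; apply: eq_count. Qed.

Lemma card_le_k (k : 'I_N) : #|[pred i : 'I_N | (i <= k)%N]| = k.+1.
Proof.
transitivity (count (fun i => (i <= k)%N) (iota 0 N)); first exact: card_ordP.
rewrite -size_filter.
by rewrite (filter_iota_leq 0 (ltn_ord k)) size_iota.
Qed.

Lemma card_lt_k (k : nat) : (k <= N)%N -> #|[pred i : 'I_N | (i < k)%N]| = k.
Proof.
move=> kN; transitivity (count (fun i => (i < k)%N) (iota 0 N)); first exact: card_ordP.
rewrite -size_filter.
by rewrite (filter_iota_ltn 0 kN) size_iota.
Qed.

Lemma M1 (k : 'I_N) : (k.+1 <= count (fun x => (x <= f k)%R) (map f (enum 'I_N)))%N.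
Proof.
rewrite count_mapf -card_le_k; apply: subset_leq_card; apply/subsetP => i.
by rewrite !inE => /fmono.
Qed.

Lemma M2 (k : 'I_N) : (count (fun x => (x < f k)%R) (map f (enum 'I_N)) <= k)%N.
Proof.
rewrite count_mapf; apply: (leq_trans _ (eq_leq (card_lt_k (ltnW (ltn_ord k))))).
apply: subset_leq_card.
apply/subsetP => i; rewrite !inE => lt; rewrite ltnNge; apply/negP => /fmono.
by rewrite leNgt lt.
Qed.

Lemma M3 (j : 'I_N) c : (j.+1 <= count (fun x => (x <= c)%R) (map f (enum 'I_N)))%N -> f j <= c.
Proof.
move=> h; rewrite leNgt; apply/negP => cj; move: h.
rewrite count_mapf; apply/negP; rewrite -ltnNge ltnS.
apply: (leq_trans _ (eq_leq (card_lt_k (ltnW (ltn_ord j))))).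
apply: subset_leq_card; apply/subsetP => i; rewrite !inE => ic.
rewrite ltnNge; apply/negP => /fmono ji.
by move: (le_lt_trans ic cj); rewrite ltNge ji.
Qed.

Lemma M4 (j : 'I_N) c : (count (fun x => (x < c)%R) (map f (enum 'I_N)) <= j)%N -> c <= f j.
Proof.
move=> h; rewrite leNgt; apply/negP => jc; move: h.
rewrite count_mapf; apply/negP; rewrite -ltnNge -(card_le_k j).
apply: subset_leq_card; apply/subsetP => i; rewrite !inE => ij.
exact: (le_lt_trans (fmono ij) jc).
Qed.
End Mono.



Lemma interlace (R : realFieldType) N (lam theta : 'I_N -> R) (as_ bs : seq R) (p DW : nat) (top : R) :
  (forall i j : 'I_N, (i <= j)%N -> lam i <= lam j) ->
  (forall i j : 'I_N, (i <= j)%N -> theta i <= theta j) ->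
  perm_eq (map lam (enum 'I_N)) (as_ ++ bs) ->
  perm_eq (map theta (enum 'I_N)) (nseq p (0:R) ++ bs) ->
  size as_ = p -> (DW <= p)%N -> (p - DW <= count (pred1 (0%R:R)) as_)%N ->
  (forall x, x \in bs -> 0 <= x <= top) -> 0 <= top ->
  forall k : 'I_N,
    ext_eig lam 0 (k.+1%:Z - DW%:Z) <= theta k /\ theta k <= ext_eig lam top (k.+1%:Z + p%:Z).
Proof.
move=> lmono tmono pl pt sa DWp cz hbs top0 k.
set c := theta k.
have [c0 ctop] : 0 <= c /\ c <= top.
  have : c \in nseq p (0:R) ++ bs by rewrite -(perm_mem pt) map_f ?mem_enum.
  rewrite mem_cat mem_nseq => /orP[/andP[_ /eqP ->]|/hbs /andP[]] //.
have cl P : count P (map lam (enum 'I_N)) = (count P as_ + count P bs)%N.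
  by rewrite ((seq.permP pl) P) count_cat.
have ct P : count P (map theta (enum 'I_N)) = (count P (nseq p (0%R:R)) + count P bs)%N.
  by rewrite ((seq.permP pt) P) count_cat.
split.
- have [DWk|kDW] := leqP DW k.
    have -> : (k.+1%:Z - DW%:Z = Posz (k - DW).+1)%R.
      by rewrite -subSn // subzn // ltnW.
    rewrite /ext_eig; case: insubP => [j _ vj|]; last by rewrite /= (leq_ltn_trans (leq_subr _ _) (ltn_ord k)).
    apply: (M3 lmono); rewrite cl vj.
    have h1 := M1 tmono k; rewrite ct count_nseq /= c0 mul1n -/c in h1.
    have h2 : (count (pred1 (0%R:R)) as_ <= count (fun x => (x <= c)%R) as_)%N.
      by apply: sub_count => x /= /eqP ->.
    have h3 : (k.+1 <= p + count (fun x => (x <= c)%R) bs)%N by exact: h1.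
    apply: (@leq_trans ((p - DW) + count (fun x => (x <= c)%R) bs)%N).
      move: h3 DWp DWk; set B := count _ bs; lia.
    by rewrite leq_add2r; apply: leq_trans cz h2.
  have : (k.+1%:Z - DW%:Z <= 0)%R.
    by rewrite subr_le0 lez_nat.
  by case: (_ - _)%R => [[|m]|m] //=.
- have -> : (k.+1%:Z + p%:Z = Posz (k + p).+1)%R by rewrite -PoszD addSn.
  rewrite /ext_eig; case: insubP => [j _ vj|] //.
  apply: (M4 lmono); rewrite cl vj.
  have h1 := M2 tmono k; rewrite ct -/c in h1.
  have h2 := count_size (fun x => (x < c)%R) as_.
  rewrite sa in h2.
  have h3 : (count (fun x => (x < c)%R) bs <= k)%N by apply: leq_trans (leq_addl _ _) h1.
  by rewrite addnC; apply: leq_add h3 h2.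
Qed.

Section Key.
Variables (R : realFieldType) (V : finType).

Definition eps (v : V) (X : {set V}) : R := (-1) ^+ pos v X.

Lemma pos_U1 (x y : V) (X : {set V}) : y \notin X ->
  pos x (y |: X) = (pos x X + (enum_rank y < enum_rank x))%N.
Proof.
move=> yX; rewrite /pos.
have -> : [set u in y |: X | (enum_rank u < enum_rank x)%N] =
   (if (enum_rank y < enum_rank x)%N then y |: [set u in X | (enum_rank u < enum_rank x)%N]
    else [set u in X | (enum_rank u < enum_rank x)%N]).
  apply/setP => u; case: ifP => h; rewrite !inE; case: eqVneq => [->|] //=.
  by rewrite h ?andbF ?(negbTE yX).
case: ifP => _; last by rewrite addn0.
by rewrite cardsU1 inE (negbTE yX) addnC.
Qed.

Lemma pos_self (x : V) (X : {set V}) : pos x (x |: X) = pos x X.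
Proof.
rewrite /pos; apply: eq_card => u; rewrite !inE.
by case: eqVneq => [->|] /=; rewrite ?ltnn ?andbF.
Qed.

Lemma eps_swap (u v : V) (E : {set V}) : u != v -> u \notin E -> v \notin E ->
  eps v (v |: (u |: E)) * eps u (v |: (u |: E)) = - (eps u (u |: E) * eps v (v |: E)).
Proof.
move=> uv uE vE.
have vuE : v \notin u |: E by rewrite !inE negb_or eq_sym uv.
rewrite /eps (pos_U1 u vuE) !pos_self (pos_U1 v uE) -!exprD.
have : ((enum_rank u < enum_rank v) + (enum_rank v < enum_rank u) = 1)%N.
  have : enum_rank u != enum_rank v by rewrite (inj_eq enum_rank_inj).
  by rewrite neq_ltn; case: ltngtP.
move=> e.
have -> : (pos v E + (enum_rank u < enum_rank v) + (pos u E + (enum_rank v < enum_rank u)) = (pos u E + pos v E).+1)%N.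
  by move: e; set a := (_ < _)%N; set b := (_ < _)%N; lia.
by rewrite exprS mulN1r.
Qed.


Lemma inc_expand (Fb : {set V}) (g : {set V} -> R) :
  \sum_F inc R Fb F * g F = \sum_(v in Fb) eps v Fb * g (Fb :\ v).
Proof.
have step F : inc R Fb F * g F =
    \sum_(v | (v \in Fb) && (F == Fb :\ v)) eps v Fb * g F.
  rewrite /inc; case: ifP => [/andP[sF /eqP cF]|hF].
    rewrite big_distrl /=; apply: eq_bigl => v; rewrite !inE.
    apply/andP/andP => [[vF vFb]|[vFb /eqP ->]]; last by rewrite !inE eqxx.
    split=> //; rewrite eqEcard; apply/andP; split.
      apply/subsetP => w wF; rewrite !inE (subsetP sF _ wF) andbT.
      by apply: contraNneq vF => <-.
    by move: cF; rewrite (cardsD1 v Fb) vFb add1n => -[->].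
  rewrite mul0r big_pred0 // => v; apply/negbTE/negP => /andP[vFb /eqP eF].
  move: hF; rewrite eF subD1set /= (cardsD1 v Fb) vFb add1n eqxx.
  by [].
rewrite (eq_bigr _ (fun F _ => step F)) (exchange_big_dep xpredT) //= [RHS]big_mkcond /=.
apply: eq_bigr => v _; case: (boolP (v \in Fb)) => vFb.
  by rewrite (big_pred1 (Fb :\ v)) // => F; rewrite vFb.
by rewrite big_pred0 // => F; rewrite (negbTE vFb).
Qed.

Lemma RL (j : nat) (h : {set V} -> V -> R) :
  \sum_(X : {set V} | #|X| == j.+1) \sum_(v in X) h X v =
  \sum_(Y : {set V} | #|Y| == j) \sum_(v | v \notin Y) h (v |: Y) v.
Proof.
rewrite (exchange_big_dep xpredT) //= [RHS](exchange_big_dep xpredT) //=.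
apply: eq_bigr => v _.
rewrite (reindex_onto (fun Y => v |: Y) (fun X => X :\ v)) /=; last first.
  by move=> X /andP[_ vX]; rewrite setD1K.
apply: eq_bigl => Y; case vY: (v \in Y).
  rewrite andbF; apply/negbTE; rewrite negb_and; apply/orP; right.
  apply/negP => /eqP e; have : v \in Y by [].
  by rewrite -e !inE eqxx.
rewrite setU1K ?vY // eqxx setU11 !andbT cardsU1 vY add1n eqSS.
by [].
Qed.


Lemma eps2 v X : eps v X * eps v X = 1.
Proof. by rewrite /eps -exprD addnn -signr_odd odd_double. Qed.

Lemma sq_expand (I : finType) (P : pred I) (a : I -> R) :
  (\sum_(i | P i) a i) ^+ 2 =
  \sum_(i | P i) (a i * a i + \sum_(j | P j && (j != i)) a i * a j).
Proof.
rewrite expr2 big_distrl /=; apply: eq_bigr => i Pi.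
by rewrite big_distrr /= (bigD1 i) //.
Qed.

Lemma setU1D1 (u v : V) (E : {set V}) : u \notin E -> u != v ->
  (v |: (u |: E)) :\ u = v |: E.
Proof.
move=> uE uv; apply/setP => x; rewrite !inE.
case: (eqVneq x u) => [->|] /=; first by rewrite (negbTE uv) (negbTE uE).
by [].
Qed.

Lemma key (n : nat) (g : {set V} -> R) :
  \sum_(Fb : {set V} | #|Fb| == n.+2) (\sum_F inc R Fb F * g F) ^+ 2 <=
  #|V|%:R * \sum_(F : {set V} | #|F| == n.+1) g F ^+ 2.
Proof.
pose a Fb v := eps v Fb * g (Fb :\ v).
pose b E w := eps w (w |: E) * g (w |: E).
pose diag := \sum_(Fb : {set V} | #|Fb| == n.+2) \sum_(v in Fb) g (Fb :\ v) ^+ 2.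
pose off := \sum_(Fb : {set V} | #|Fb| == n.+2) \sum_(v in Fb)
              \sum_(u | (u \in Fb) && (u != v)) a Fb v * a Fb u.
pose diag' := \sum_(E : {set V} | #|E| == n) \sum_(w | w \notin E) g (w |: E) ^+ 2.
pose off' := \sum_(E : {set V} | #|E| == n) \sum_(w | w \notin E)
              \sum_(v | (v \notin E) && (v != w)) b E w * b E v.
pose P := \sum_(E : {set V} | #|E| == n) (\sum_(w | w \notin E) b E w) ^+ 2.
have eL : \sum_(Fb : {set V} | #|Fb| == n.+2) (\sum_F inc R Fb F * g F) ^+ 2 = diag + off.
  rewrite -big_split /=; apply: eq_bigr => Fb _.
  rewrite inc_expand (sq_expand (fun v => v \in Fb) (a Fb)) big_split /=.
  by congr (_ + _); apply: eq_bigr => v _; rewrite /a mulrACA eps2 mul1r expr2.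
have eP : P = diag' + off'.
  rewrite -big_split /=; apply: eq_bigr => E _.
  rewrite (sq_expand (fun w => w \notin E) (b E)) big_split /=.
  by congr (_ + _); apply: eq_bigr => v _; rewrite /b mulrACA eps2 mul1r expr2.
have ed : diag = \sum_(Y : {set V} | #|Y| == n.+1) g Y ^+ 2 *+ #|~: Y|.
  rewrite /diag (RL n.+1 (fun X v => g (X :\ v) ^+ 2)).
  apply: eq_bigr => Y _.
  rewrite (eq_bigr (fun _ => g Y ^+ 2)); last by move=> v vY; rewrite setU1K.
  by rewrite -sumr_const; apply: eq_bigl => v; rewrite inE.
have ed' : diag' = \sum_(Y : {set V} | #|Y| == n.+1) g Y ^+ 2 *+ #|Y|.
  rewrite /diag' -(RL n (fun X v => g X ^+ 2)).
  by apply: eq_bigr => Y _; rewrite sumr_const.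
have eo : off = - off'.
  rewrite /off (RL n.+1 (fun X v => \sum_(u | (u \in X) && (u != v)) a X v * a X u)).
  rewrite (eq_bigr (fun Y : {set V} => \sum_(u in Y) \sum_(v | v \notin Y) a (v |: Y) v * a (v |: Y) u)); last first.
    move=> Y _; rewrite exchange_big /=; apply: eq_bigr => v vY.
    apply: eq_bigl => u; rewrite !inE.
    by case: (eqVneq u v) => [->|] //=; rewrite ?andbT // (negbTE vY).
  move: (RL n (fun X u => \sum_(v | v \notin X) a (v |: X) v * a (v |: X) u)) => /= ->.
  rewrite /off' -sumrN; apply: eq_bigr => E _; rewrite -sumrN; apply: eq_bigr => u uE.
  rewrite -sumrN (eq_bigl (fun v => (v \notin E) && (v != u))); last first.
    by move=> v; rewrite !inE negb_or andbC.
  apply: eq_bigr => v /andP[vE vu].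
  have vuE : v \notin u |: E by rewrite !inE negb_or vu vE.
  have uv : u != v by rewrite eq_sym.
  rewrite /a /b (setU1K vuE) (setU1D1 uE uv) mulrACA (eps_swap uv uE vE) mulNr.
  by rewrite mulrACA.
have P0 : 0 <= P by apply: sumr_ge0 => E _; apply: sqr_ge0.
rewrite eL eo.
apply: (@le_trans _ _ (diag + (- off') + P)); first by rewrite lerDl.
rewrite eP addrACA addNr addr0 ed ed' -big_split /= big_distrr /=.
rewrite le_eqVlt; apply/orP; left; apply/eqP; apply: eq_bigr => Y _.
by rewrite -mulrnDr addnC cardsC mulr_natl.
Qed.

End Key.

Lemma rayleigh (V : finType) (R : realFieldType) (n : nat) (FK1 S : {set {set V}}) (x : R) :
  (forall Fb, Fb \in FK1 -> #|Fb| == n.+2) -> (forall F, F \in S -> #|F| == n.+1) ->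
  root (char_poly (kmx (fun F G => \sum_(Fb in FK1) inc R Fb F * inc R Fb G) S)) x ->
  0 <= x <= #|V|%:R.
Proof.
move=> h1 hS; rewrite -eigenvalue_root_char => /eigenvalueP [v vM vnz].
set M := kmx _ S in vM.
have Q : \sum_b (v *m M) 0 b * v 0 b = x * \sum_b v 0 b ^+ 2.
  rewrite vM big_distrr /=; apply: eq_bigr => b _; by rewrite mxE expr2 mulrA.
have Qe : \sum_b (v *m M) 0 b * v 0 b =
    \sum_(Fb in FK1) (\sum_a v 0 a * inc R Fb (enum_val a)) ^+ 2.
  under eq_bigr => b _ do rewrite mxE big_distrl /=.
  under eq_bigr => b _ do under eq_bigr => a _ do rewrite mxE big_distrr big_distrl /=.
  rewrite exchange_big /=.
  under eq_bigr => a _ do rewrite exchange_big /=.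
  rewrite exchange_big /=; apply: eq_bigr => Fb _.
  rewrite expr2 big_distrl /=; apply: eq_bigr => a _.
  rewrite big_distrr /=; apply: eq_bigr => b _.
  ring.
pose g F := \sum_(a | enum_val a == F) v 0 a.
have gE a : g (enum_val a) = v 0 a.
  by rewrite /g (big_pred1 a) // => b; rewrite (inj_eq enum_val_inj).
have g0 F : F \notin S -> g F = 0.
  move=> FS; rewrite /g big_pred0 // => b; apply: contraNF FS => /eqP <-.
  exact: enum_valP.
have ig Fb : \sum_a v 0 a * inc R Fb (enum_val a) = \sum_F inc R Fb F * g F.
  rewrite /g; under [RHS]eq_bigr => F _ do rewrite big_distrr.
  rewrite (exchange_big_dep xpredT) //=; apply: eq_bigr => a _.
  rewrite (big_pred1 (enum_val a)); last by move=> F; rewrite /= eq_sym.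
  by rewrite mulrC.
have sg : \sum_a v 0 a ^+ 2 = \sum_(F : {set V} | #|F| == n.+1) g F ^+ 2.
  rewrite (eq_bigr (fun a => g (enum_val a) ^+ 2)); last by move=> a _; rewrite gE.
  rewrite -(big_enum_val (fun F => g F ^+ 2)) [LHS]big_mkcond [RHS]big_mkcond /=.
  apply: eq_bigr => F _; case: (boolP (F \in S)) => FS.
    by rewrite (hS _ FS).
  by rewrite g0 // expr0n /=; case: ifP.
have pos : 0 < \sum_b v 0 b ^+ 2.
  rewrite lt_def sumr_ge0 ?andbT; last by move=> b _; apply: sqr_ge0.
  apply/negP => /eqP/psumr_eq0P h; apply/negP: vnz; apply/negPn/eqP/rowP => b.
  rewrite mxE; apply/eqP; rewrite -sqrf_eq0 h //.
  by move=> i _; apply: sqr_ge0.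
have up : \sum_(Fb in FK1) (\sum_a v 0 a * inc R Fb (enum_val a)) ^+ 2 <=
    #|V|%:R * \sum_b v 0 b ^+ 2.
  rewrite sg; apply: le_trans (key n g).
  rewrite [X in _ <= X]big_mkcond [X in X <= _]big_mkcond /=; apply: ler_sum => Fb _.
  rewrite ig; case: ifP => FbK; first by rewrite (h1 _ FbK).
  by case: ifP => // _; apply: sqr_ge0.
have lo : 0 <= \sum_(Fb in FK1) (\sum_a v 0 a * inc R Fb (enum_val a)) ^+ 2.
  by apply: sumr_ge0 => Fb _; apply: sqr_ge0.
rewrite -Qe Q in up lo.
rewrite (pmulr_lge0 _ pos) in lo.
by rewrite lo /= -(ler_pM2r pos).
Qed.

Theorem theorem2p10 (R : realFieldType) (V : finType) (n : nat)
  (K H : {set {set V}})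
  (wK wH wL : {set V} -> R)
  (lam theta : 'I_#|faces K n| -> R) :
  is_complex K -> has_dim K n.+1 -> (forall v : V, [set v] \in K) ->
  (forall F, wK F = 1) ->
  is_complex H -> H \subset K -> has_dim H n.+1 ->
  (forall F, wH F = if F \in H then 1 else 0) ->
  (forall F, wL F = wK F - wH F) ->
  is_complex [set F in K | 0 < wL F] ->
  sorted_eigs (up_laplacian K wK n) lam ->
  sorted_eigs (up_laplacian K wL n) theta ->
  let DW := (#|faces H n.+1| - dim_cohom R H n)%N in
  let DH := #|faces H n| in
  forall k : 'I_#|faces K n|,
    ext_eig lam 0 (k.+1%:Z - DW%:Z) <= theta k
    /\ theta k <= ext_eig lam (#|V|%:R) (k.+1%:Z + DH%:Z).
Proof.
move=> cK dK vK wK1 cH HK dH wHE wLE cL [lamE lamM] [thE thM] DW DH k.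
set S := faces K n; set S1 := faces H n; set S2 := S :\: S1.
have wL_H F : F \in H -> wL F = 0 by move=> h; rewrite wLE wK1 wHE h subrr.
have wL_nH F : F \notin H -> wL F = 1 by move=> h; rewrite wLE wK1 wHE (negbTE h) subr0.
have inL F : (F \in [set F in K | 0 < wL F]) = (F \in K) && (F \notin H).
  rewrite inE; case: (boolP (F \in H)) => h.
    by rewrite wL_H // ltxx andbF.
  by rewrite wL_nH // ltr01 andbT.
have closeH (Fb F : {set V}) : Fb \in H -> F \subset Fb -> F != set0 -> F \in H.
  by move=> a b c; apply: cH.2 a b c.
have closeO (Fb F : {set V}) : Fb \in K -> Fb \notin H -> F \subset Fb -> F != set0 -> F \notin H.
  move=> FbK FbH sub ne; have := cL.2 Fb F; rewrite !inL FbK FbH.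
  by move=> /(_ isT sub ne) /andP[].
have inc0 (Fb F : {set V}) : ~~ (F \subset Fb) -> inc R Fb F = 0.
  by rewrite /inc => /negbTE ->.
have ne_face j (F : {set V}) : F \in faces K j -> F != set0.
  rewrite inE => /andP[_ /eqP c]; apply/eqP => e; by rewrite e cards0 in c.
have facesHK j : faces H j \subset faces K j.
  apply/subsetP => F; rewrite !inE => /andP[FH ->]; by rewrite (subsetP HK _ FH).
have S1H (F : {set V}) : F \in S1 -> F \in H by rewrite inE => /andP[].
have S2H (F : {set V}) : F \in S2 -> F \notin H.
  rewrite !inE => /andP[h1 /andP[FK cF]]; apply: contra h1 => FH; by rewrite FH.
have S2S (F : {set V}) : F \in S2 -> F \in S by rewrite inE => /andP[].
have cross (Fb x y : {set V}) : Fb \in faces K n.+1 -> x \in S1 -> y \in S2 ->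
    inc R Fb x * inc R Fb y = 0.
  move=> FbK xS1 yS2.
  case: (boolP (x \subset Fb)) => xs; last by rewrite inc0 ?mul0r.
  case: (boolP (y \subset Fb)) => ys; last by rewrite (inc0 _ _ ys) mulr0.
  have FbK' : Fb \in K by move: FbK; rewrite inE => /andP[].
  case: (boolP (Fb \in H)) => FbH.
    by move: (S2H _ yS2); rewrite (closeH _ _ FbH ys (ne_face _ _ (S2S _ yS2))).
  by move: (closeO _ _ FbK' FbH xs (ne_face _ _ (subsetP (facesHK n) _ xS1))); rewrite S1H.
pose PhiW (w : {set V} -> R) (F G : {set V}) := if w F != 0 then
  \sum_(Fb in faces K n.+1) w Fb / w F * inc R Fb F * inc R Fb G else 0.
have LE w : up_laplacian K w n = kmx (PhiW w) S.
  by apply/matrixP => a b; rewrite !mxE.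
have hK : char_poly (up_laplacian K wK n) =
    char_poly (kmx (PhiW wK) S1) * char_poly (kmx (PhiW wK) S2).
  rewrite LE; apply: char_kmx_split; first exact: facesHK.
  move=> x y xS1 yS2; rewrite /PhiW !wK1 oner_eq0 /=; split; apply: big1 => Fb FbK.
    by rewrite -mulrA cross // mulr0.
  by rewrite -mulrA [inc R Fb y * _]mulrC cross // mulr0.
have hL : char_poly (up_laplacian K wL n) =
    char_poly (kmx (PhiW wL) S1) * char_poly (kmx (PhiW wL) S2).
  rewrite LE; apply: char_kmx_split; first exact: facesHK.
  move=> x y xS1 yS2; rewrite /PhiW (wL_H _ (S1H _ xS1)) eqxx /=; split => //.
  case: ifP => // _; apply: big1 => Fb FbK.
  by rewrite -mulrA [inc R Fb y * _]mulrC cross // mulr0.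
have hL1 : kmx (PhiW wL) S1 = 0.
  apply/matrixP => a b; rewrite !mxE /PhiW (wL_H _ (S1H _ (enum_valP a))).
  by rewrite eqxx.
have hL2 : kmx (PhiW wL) S2 = kmx (PhiW wK) S2.
  apply/matrixP => a b; rewrite !mxE /PhiW.
  have yH := S2H _ (enum_valP a).
  rewrite (wL_nH _ yH) wK1 oner_eq0 /=; apply: eq_bigr => Fb FbK.
  case: (boolP (Fb \in H)) => FbH.
    rewrite (inc0 Fb (enum_val a)) ?mulr0 ?mul0r //.
    apply: contra yH => ys; apply: closeH FbH ys _.
    exact: ne_face (S2S _ (enum_valP a)).
  by rewrite wL_nH // wK1.
have hM : kmx (PhiW wK) S2 =
    kmx (fun F G => \sum_(Fb in faces K n.+1) inc R Fb F * inc R Fb G) S2.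
  apply/matrixP => a b; rewrite !mxE /PhiW wK1 oner_eq0 /=.
  by apply: eq_bigr => Fb _; rewrite !wK1 divr1 mul1r.
have hA : kmx (PhiW wK) S1 = (cobound_mx R H n)^T *m cobound_mx R H n.
  apply/matrixP => a b; rewrite !mxE /PhiW wK1 oner_eq0 /=.
  rewrite (big_setID (faces H n.+1)) /= (setIidPr (facesHK n.+1)).
  rewrite [X in _ + X]big1 ?addr0; last first.
    move=> Fb; rewrite !inE => /andP[h1 /andP[FbK cFb]].
    have FbH : Fb \notin H by apply: contra h1 => ->.
    rewrite (inc0 Fb (enum_val a)) ?mulr0 ?mul0r //.
    apply/negP => xs; have := closeO _ _ FbK FbH xs.
    rewrite (S1H _ (enum_valP a)) => /(_ (ne_face _ _ (subsetP (facesHK n) _ (enum_valP a)))).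
    by [].
  rewrite big_enum_val.
  by apply: eq_bigr => c _; rewrite !mxE !wK1 divr1 mul1r.
have DWr : DW = \rank (cobound_mx R H n).
  have e0 : #|faces H n.+2| = 0%N.
    apply: eq_card0 => F; rewrite !inE; apply/negP => /andP[FH /eqP cF].
    by have := dH.1 F FH; rewrite cF ltnn.
  have r0 : \rank (cobound_mx R H n.+1) = 0%N.
    apply/eqP; rewrite -leqn0; apply: leq_trans (rank_leq_row _) _; by rewrite e0.
  by rewrite /DW /dim_cohom r0 subn0 subKn // rank_leq_row.
have DWp : (DW <= DH)%N by rewrite DWr rank_leq_col.
set A := kmx (PhiW wK) S1.
set M := kmx (PhiW wK) S2.
have hdiv : 'X ^+ (DH - DW) %| char_poly A.
  rewrite /A hA; apply: dvdp_trans (char_poly_rank _); rewrite dvdp_exp2l //.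
  by rewrite leq_sub2l // DWr mxrankM_maxr.
have dA : char_poly A %| \prod_(i < #|S|) ('X - (lam i)%:P).
  by rewrite -lamE hK dvdp_mulIl.
have dM : char_poly M %| \prod_(i < #|S|) ('X - (lam i)%:P).
  by rewrite -lamE hK dvdp_mulIr.
have [ma eA] := dvdp_prod_XsubC dA.
have [mb eM] := dvdp_prod_XsubC dM.
set as_ := map lam (mask ma (index_enum 'I_#|S|)).
set bs := map lam (mask mb (index_enum 'I_#|S|)).
have cA : char_poly A = \prod_(x <- as_) ('X - x%:P).
  rewrite big_map; apply/eqP; rewrite -eqp_monic ?char_poly_monic ?monic_prod_XsubC //.
have cM : char_poly M = \prod_(x <- bs) ('X - x%:P).
  rewrite big_map; apply/eqP; rewrite -eqp_monic ?char_poly_monic ?monic_prod_XsubC //.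
have cTh : char_poly (up_laplacian K wL n) = \prod_(x <- nseq DH 0 ++ bs) ('X - x%:P).
  rewrite hL hL1 hL2 -/M cM big_cat /=; congr (_ * _).
  rewrite /char_poly /char_poly_mx map_mx0 subr0 det_scalar.
  rewrite /DH -/S1; by elim: #|S1| => [|m IH]; rewrite ?big_nil ?expr0 //= big_cons -IH exprS subr0.
have ie : index_enum 'I_#|S| = enum 'I_#|S| by rewrite enumT [index_enum _]unlock.
have pl : perm_eq (map lam (enum 'I_#|S|)) (as_ ++ bs).
  by apply: prod_XsubC_eq; rewrite big_cat /= -cA -cM -hK lamE -ie big_map.
have pt : perm_eq (map theta (enum 'I_#|S|)) (nseq DH 0 ++ bs).
  by apply: prod_XsubC_eq; rewrite -cTh thE -ie big_map.
have sa : size as_ = DH.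
  by have := size_char_poly A; rewrite cA size_prod_XsubC => -[].
have cz : (DH - DW <= count (pred1 (0%R : R)) as_)%N.
  rewrite -mu_prod_XsubC -cA mup_geq ?subr0 //.
  by rewrite monic_neq0 ?char_poly_monic.
have hbs x : x \in bs -> 0 <= x <= #|V|%:R.
  move=> xb; apply: (@rayleigh V R n (faces K n.+1) S2).
  - by move=> Fb; rewrite inE => /andP[].
  - by move=> F /S2S; rewrite inE => /andP[].
  - by rewrite -hM -/M cM root_prod_XsubC.
exact: (interlace lamM thM pl pt sa DWp cz hbs (ler0n _ _)).
Qed.
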